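(* Let $T'$ and $T''$ be canonical subtrees (with respect to a weighted rooted tree $T$ and an integer $k\ge 4$) such that $T''$ is one of the connected components of the forest obtained from $T'$ by deleting the vertices of $C_{T'}$. Let $v$ be a vertex of $T''$. Let $X$ be the set of vertices in $C_{T'}$ that are ancestors of $v$ in $T$, let $x$ be the element of $X$ that is deepest in $T$, and let $x'$ be the child of $x$ that is an ancestor of $v$. Then $x'=rt(T'')$.
   Context: Let $T$ be a rooted tree on $n$ vertices with positive edge weights. Ancestor/descendant refer to $T$, and a vertex counts as its own ancestor and descendant. $T_v$ denotes the subtree of $T$ rooted at $v$. For every non-leaf vertex $v$ of $T$ fix a child $c_1(v)$ with $|T_{c_1(v)}|$ maximal among the children of $v$; the edges $(v,c_1(v))$ are called leftmost. A subtree $R$ of $T$ (connected subgraph) is rooted at its vertex closest to the root of $T$, denoted $rt(R)$, and inherits the leftmost labelling; $R_v$ is the subtree of $R$ rooted at $v$. For $v\in V(R)$, $P_R(v)$ is the longest downward path from $v$ in $R$ using only leftmost edges; its last vertex is $l(v)$, and $l(R):=l(rt(R))$. For an integer $d$, a vertex $v$ of $R$ is $d$-balanced (in $R$) if $|R_{c_1(v)}|\le |R|-d$ (where $|R_{c_1(v)}|=0$ if $c_1(v)$ is undefined or not in $R$). $b_d(v)$ is the first $d$-balanced vertex on $P_R(v)$, or NULL if none. Define $CV(R,d)=\emptyset$ if $b_d(rt(R))$ is NULL, and otherwise, with $b=b_d(rt(R))$, $CV(R,d)=\{b\}\cup\bigcup_{w}CV(R_w,d)$, the union over the children $w$ of $b$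 in $R$. Fix an integer $k\ge 4$. For a subtree $R$ with $m$ vertices, $C_R:=V(R)$ if $k\ge m/2-1$, and otherwise $C_R:=CV(R,m/k)\cup\{l(R),rt(R)\}$. Canonical subtrees: $T$ is canonical; if $R$ is canonical, every connected component of the forest obtained from $R$ by deleting the vertices of $C_R$ (and incident edges) is canonical. *)

(* Defs.v *)
From HB Require Import structures.
From mathcomp Require Import all_boot all_order all_algebra.
Set Implicit Arguments.
Unset Strict Implicit.
Unset Printing Implicit Defensive.
Import Order.TTheory GRing.Theory Num.Theory.

(* The edges are the pairs (par c, c) for c <> r. *)

Section Tree.
Variables (V : finType) (par : V -> V) (r : V) (c1 : V -> option V).

Definition is_rooted_tree : Prop :=
  par r = r /\ forall v : V, exists i : nat, iter i par v = r.

Definition anc (u v : V) : bool := [exists i : 'I_#|V|, iter i par v == u].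

Definition depth (v : V) : nat := #|[set u | anc u v]|.-1.

Definition is_child (c v : V) : bool := (par c == v) && (c != r).

Definition subT (v : V) : {set V} := [set u | anc v u].

(* c1 v = Some c: the fixed leftmost child; None iff v is a leaf *)
Definition c1_spec : Prop :=
  forall v : V,
    (c1 v = None <-> forall c, ~~ is_child c v) /\
    (forall c, c1 v = Some c ->
       is_child c v /\ forall c', is_child c' v -> #|subT c'| <= #|subT c|).

Definition adjR (R : {set V}) : rel V :=
  [rel x y | [&& x \in R, y \in R & (is_child x y || is_child y x)]].

Definition component (F S : {set V}) : Prop :=
  exists2 x, x \in F & S = [set y in F | connect (adjR F) x y].

Definition rt (R : {set V}) : V :=
  match [pick x in R] with
  | Some x0 => [arg min_(x < x0 in R) depth x]
  | None => r
  end.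

Definition subR (R : {set V}) (v : V) : {set V} := [set u in R | anc v u].

Definition lnext (R : {set V}) (v : V) : V :=
  match c1 v with Some c => if c \in R then c else v | None => v end.

(* l(v): last vertex of P_R(v) *)
Definition lend (R : {set V}) (v : V) : V := iter #|V| (lnext R) v.
Definition lR (R : {set V}) : V := lend R (rt R).

Definition c1size (R : {set V}) (v : V) : nat :=
  match c1 v with Some c => if c \in R then #|subR R c| else 0 | None => 0 end.

(* d-balanced in R (d rational, to allow d = m/k) *)
Definition balanced (R : {set V}) (d : rat) (v : V) : bool :=
  ((c1size R v)%:R <= (#|R|)%:R - d)%R.

Fixpoint bfind (R : {set V}) (d : rat) (fuel : nat) (v : V) : option V :=
  if balanced R d v then Some v else
  match fuel with
  | 0 => None
  | f.+1 => match c1 v with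
            | Some c => if c \in R then bfind R d f c else None
            | None => None
            end
  end.

(* b_d(v): first d-balanced vertex on P_R(v) *)
Definition bd (R : {set V}) (d : rat) (v : V) : option V := bfind R d #|V| v.

Fixpoint CVf (fuel : nat) (R : {set V}) (d : rat) : {set V} :=
  match fuel with
  | 0 => set0
  | f.+1 =>
    match bd R d (rt R) with
    | None => set0
    | Some b => b |: \bigcup_(w in R | is_child w b) CVf f (subR R w) d
    end
  end.

(* CV(R,d); recursion depth is at most |R| <= |V| *)
Definition CV (R : {set V}) (d : rat) : {set V} := CVf #|V|.+1 R d.

Definition CR (k : nat) (R : {set V}) : {set V} :=
  let m := #|R| in
  if ((m%:R / 2%:R - 1 <= k%:R :> rat))%R then R
  else CV R ((m%:R / k%:R)%R) :|: [set lR R; rt R].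

Inductive canonical (k : nat) : {set V} -> Prop :=
  | can_top : canonical k [set: V]
  | can_step R S : canonical k R -> component (R :\: CR k R) S -> canonical k S.

End Tree.

(* Main.v *)
Require Import Defs.
From mathcomp Require Import all_boot all_order all_algebra.
Set Implicit Arguments. Unset Strict Implicit.

Section S.
Variables (V : finType) (par : V -> V) (r : V) (c1 : V -> option V).
Hypothesis Ht : is_rooted_tree par r.

Lemma ancP u v : reflect (exists i, iter i par v = u) (anc par u v).
Proof.
apply: (iffP existsP) => [[i /eqP <-]|[i <-]]; first by exists i.
have hc : fconnect par v (iter i par v) by apply: fconnect_iter.
have hlt : findex par v (iter i par v) < #|V|.
  by apply: leq_trans (findex_max hc) (max_card _).
by exists (Ordinal hlt); rewrite /= iter_findex.
Qed.

Lemma anc_refl u : anc par u u.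
Proof. by apply/ancP; exists 0. Qed.

Lemma anc_par u : anc par (par u) u.
Proof. by apply/ancP; exists 1. Qed.

Lemma anc_trans a b c : anc par a b -> anc par b c -> anc par a c.
Proof.
move=> /ancP[i <-] /ancP[j <-]; apply/ancP; exists (i + j).
by rewrite iterD.
Qed.

Lemma iter_r n : iter n par r = r.
Proof. by case: Ht => hr _; elim: n => //= n ->. Qed.

Lemma iter_periodic b p n : iter p par b = b -> iter (n * p) par b = b.
Proof.
move=> hp; elim: n => [|n IH] //=.
by rewrite mulSn iterD IH hp.
Qed.

Lemma fix_r b p : 0 < p -> iter p par b = b -> b = r.
Proof.
move=> p0 hp; case: Ht => _ /(_ b) [h hh].
have : iter (h * p) par b = b by apply: iter_periodic.
have hle : h <= h * p by rewrite leq_pmulr.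
by rewrite -(subnK hle) iterD hh iter_r => <-.
Qed.

Lemma anc_antisym a b : anc par a b -> anc par b a -> a = b.
Proof.
move=> /ancP[i hi] /ancP[j hj].
case: (posnP (i + j)) => [/eqP|p0].
  by rewrite addn_eq0 => /andP[/eqP i0 /eqP j0]; move: hi; rewrite i0.
have hb : iter (i + j) par b = b by rewrite addnC iterD hi hj.
have br := fix_r p0 hb.
by move: hi; rewrite br iter_r.
Qed.

Lemma anc_step c y : anc par c y -> y != c -> anc par c (par y).
Proof.
move=> /ancP[[|i] hi] hne; first by move: hne; rewrite -hi eqxx.
by apply/ancP; exists i; rewrite -iterSr.
Qed.

Lemma anc_root y : anc par r y.
Proof. by case: Ht => _ /(_ y) [i hi]; apply/ancP; exists i. Qed.

Lemma par_fix y : par y = y -> y = r.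
Proof. by move=> h; apply: (@fix_r y 1). Qed.

Lemma depth_anc a b : anc par a b -> depth par b <= depth par a -> a = b.
Proof.
move=> hab hd; apply/eqP; apply/negPn/negP => hne.
have hsub : [set u | anc par u a] \proper [set u | anc par u b].
  apply/properP; split.
    by apply/subsetP => u; rewrite !inE => h; apply: anc_trans h hab.
  exists b; first by rewrite inE anc_refl.
  rewrite inE; apply/negP => hba; move/eqP: hne; apply; exact: anc_antisym.
have := proper_card hsub.
have ha : 0 < #|[set u | anc par u a]|.
  by apply/card_gt0P; exists a; rewrite inE anc_refl.
move: hd; rewrite /depth; move: ha.
case: #|[set u | anc par u a]| => // n _.
case: #|[set u | anc par u b]| => // m /= h1 h2.
by move: (leq_ltn_trans h1 h2); rewrite ltnn.
Qed.

Lemma adjR_sym F : symmetric (adjR par r F).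
Proof.
move=> x y; rewrite /adjR /=.
by rewrite andbCA orbC.
Qed.

Lemma walk F c b s : anc par c b -> path (adjR par r F) b s ->
  ~~ anc par c (last b s) ->
  [/\ par c \in F, c \in F & connect (adjR par r F) b c].
Proof.
elim: s b => [|z s IH] b hcb /=; first by rewrite hcb.
move=> /andP[hbz hp] hl.
have hz : z \in F by move: hbz => /and3P[].
have hbF : b \in F by move: hbz => /and3P[].
case hcz: (anc par c z).
  case: (IH z hcz hp hl) => h1 h2 h3; split => //.
  by apply: connect_trans (connect1 hbz) h3.
move: hbz => /and3P[_ _ /orP[]] /andP[/eqP hpar _].
  case: (eqVneq b c) => [ebc|nbc].
    subst b; split => //; try by rewrite hpar.
  by move: hcz; rewrite -hpar anc_step.
by move: hcz; rewrite (anc_trans hcb) // -hpar anc_par.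
Qed.


Lemma comp_closed F S a b c : component par r F S -> a \in S -> b \in S ->
  anc par a c -> anc par c b -> c \in S.
Proof.
case=> z zF ->; rewrite !inE => /andP[aF za] /andP[bF zb] hac hcb.
case: (eqVneq c a) => [->|nca]; first by rewrite aF za.
have hsym := sym_connect_sym (adjR_sym F).
have hba : connect (adjR par r F) b a by rewrite hsym in zb; exact: connect_trans zb za.
move/connectP: hba => [p hp ha].
have hna : ~~ anc par c (last b p).
  rewrite -ha; apply/negP => hca; move/eqP: nca; apply; exact: anc_antisym.
case: (walk hcb hp hna) => _ cF bc.
by rewrite cF (connect_trans zb bc).
Qed.

Lemma canonical_closed k T a b c : canonical par r c1 k T -> a \in T -> b \in T ->
  anc par a c -> anc par c b -> c \in T.
Proof.
move=> hT; destruct hT as [|R S _ hc]; first by move=> *; rewrite inE.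
move=> ha hb hac hcb; exact: (comp_closed hc ha hb hac hcb).
Qed.

Lemma rt_spec (R : {set V}) : R != set0 ->
  rt par r R \in R /\ forall y, y \in R -> depth par (rt par r R) <= depth par y.
Proof.
move=> hR; rewrite /rt; case: pickP => [x0 hx0|h].
  by case: arg_minnP => // m mR hmin; split => // y yR; apply: hmin.
by move/set0Pn: hR => [y hy]; move: (h y); rewrite /= hy.
Qed.

Lemma lend_in (R : {set V}) v : v \in R -> lend c1 R v \in R.
Proof.
move=> hv; rewrite /lend; elim: #|V| => //= n IH.
rewrite /lnext; case: (c1 _) => // c; case: ifP => //.
Qed.

Lemma bfind_in (R : {set V}) d f v b : v \in R -> bfind par c1 R d f v = Some b -> b \in R.
Proof.
elim: f v => [|f IH] v hv /=; case: ifP => _; try by case=> <-.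
  by [].
case: (c1 v) => // c; case: ifP => // cR; exact: IH.
Qed.

Lemma CVf_sub f (R : {set V}) d : R != set0 -> CVf par r c1 f R d \subset R.
Proof.
elim: f R => [|f IH] R hR /=; first exact: sub0set.
case hb: (bd par c1 R d (rt par r R)) => [b|]; last exact: sub0set.
have bR := bfind_in (proj1 (rt_spec hR)) hb.
apply/subsetP => y; rewrite in_setU1 => /orP[/eqP->//|/bigcupP[w /andP[wR _] yin]].
have hw : subR par R w != set0 by apply/set0Pn; exists w; rewrite inE wR anc_refl.
by have := subsetP (IH _ hw) y yin; rewrite inE => /andP[].
Qed.

Lemma CR_sub k (R : {set V}) : R != set0 -> CR par r c1 k R \subset R.
Proof.
move=> hR; rewrite /CR; case: ifP => _; first exact: subxx.
apply/subsetP=> y; rewrite !inE => /orP[/(subsetP (CVf_sub _ _ hR))//|/orP[/eqP->|/eqP->]].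
  exact: lend_in (proj1 (rt_spec hR)).
exact: (proj1 (rt_spec hR)).
Qed.

End S.

Theorem lemma4 (V : finType) (par : V -> V) (r : V) (c1 : V -> option V)
    (w : V -> rat) (k : nat) (T' T'' : {set V}) (v x x' : V) :
  is_rooted_tree par r ->
  (forall u, u != r -> (0 < w u)%R) ->
  c1_spec par r c1 ->
  4 <= k ->
  canonical par r c1 k T' ->
  canonical par r c1 k T'' ->
  component par r (T' :\: CR par r c1 k T') T'' ->
  v \in T'' ->
  x \in CR par r c1 k T' -> anc par x v ->
  (forall y, y \in CR par r c1 k T' -> anc par y v -> depth par y <= depth par x) ->
  is_child par r x' x -> anc par x' v ->
  x' = rt par r T''.
Proof.
move=> Ht _ hc1 hk hT' hT'' hcomp vT'' xC xv hmax hx' x'v.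
set C := CR par r c1 k T' in hcomp xC hmax.
set F := T' :\: C in hcomp.
case: hcomp vT'' => z zF eqT'' vT''.
have vF : v \in F by move: vT''; rewrite eqT'' inE => /andP[].
have vT' : v \in T' by move: vF; rewrite inE => /andP[].
have T'0 : T' != set0 by apply/set0Pn; exists v.
have xT' : x \in T' := subsetP (CR_sub par r c1 k T'0) x xC.
move: hx' => /andP[/eqP px' x'r].
have hxx' : anc par x x' by rewrite -px' anc_par.
have G : forall c, anc par x' c -> anc par c v -> c \in F.
  move=> c h1 h2; rewrite inE (canonical_closed Ht hT' xT' vT' (anc_trans hxx' h1) h2) andbT.
  apply/negP => cC; have hd := hmax c cC h2.
  have exc := depth_anc Ht (anc_trans hxx' h1) hd; subst c.
  have ex : x' = x by apply: (anc_antisym Ht).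
  by move: x'r; rewrite (par_fix Ht (etrans px' (esym ex))) eqxx.
have hsym := sym_connect_sym (adjR_sym par r F).
have zv : connect (adjR par r F) z v by move: vT''; rewrite eqT'' inE => /andP[].
have x'T'' : x' \in T''.
  rewrite eqT'' inE G ?anc_refl //=.
  apply: connect_trans zv _.
  move/ancP: x'v => [i hi].
  suff H : forall j, j <= i -> connect (adjR par r F) v (iter j par v).
    by rewrite -hi; apply: H.
  elim=> [|j IH] hj; first exact: connect0.
  apply: connect_trans (IH (ltnW hj)) (connect1 _).
  have hin : forall l, l <= i -> iter l par v \in F.
    move=> l hl; apply: G; apply/ancP; last by exists l.
    by exists (i - l); rewrite -iterD subnK.
  apply/and3P; split; [exact: hin (ltnW hj) | exact: hin hj | apply/orP; left].
  rewrite /is_child eqxx /=.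
  apply/negP => /eqP hr; move: x'r; rewrite -hi -(subnK (ltnW hj)) iterD hr.
  by rewrite (iter_r Ht) eqxx.
have below : forall y, y \in T'' -> anc par x' y.
  move=> y; rewrite eqT'' inE => /andP[yF zy].
  have vy : connect (adjR par r F) v y by rewrite hsym in zv; exact: connect_trans zv zy.
  move/connectP: vy => [p hp hy].
  case hn: (anc par x' y) => //.
  have hn' : ~~ anc par x' (last v p) by rewrite -hy hn.
  case: (walk x'v hp hn') => + _ _.
  by rewrite px' /F inE xC.
have T''0 : T'' != set0 by apply/set0Pn; exists v.
have [rtin rtmin] := rt_spec par r T''0.
exact: (depth_anc Ht (below _ rtin) (rtmin x' x'T'')).
Qed.
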